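(* Let $N\ge1$, $s\ge2$ be integers, $\epsilon=1/N$, $F>0$, and let $\phi:(0,\infty)\to\mathbb R$ be twice differentiable with $\phi''_{kF}:=\phi''(kF)$. Suppose $\phi''_{kF}\le0$ for $k=2,\dots,s$. Call $\mathbf y_F$ a stable equilibrium of the $s$th-nearest-neighbour atomistic model if $$\epsilon\sum_{\ell=-N+1}^{N}\sum_{k=1}^{s}\phi''_{kF}\Big(\sum_{j=0}^{k-1}u'_{\ell+j}\Big)^2>0\quad\text{for all }\mathbf u\in\mathcal U\setminus\{\mathbf 0\}.$$ Then there exists a constant $B=B_F$ satisfying $$\sum_{k=2}^{s}(k-1)\phi''_{kF}\ \ge\ B_F\ \ge\ \phi''_{2F}+\sum_{k=3}^{s}\frac{k^4-k^2}{12}\phi''_{kF}$$ such that $\mathbf y_F$ is a stable equilibrium of the atomistic model if and only if $A^s_F-\epsilon^2\mu_\epsilon^2B_F>0$, where $A^s_F:=\sum_{k=1}^{s}k^2\phi''_{kF}$.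
   Context: $\mathcal{U}$ is the space of real sequences $\mathbf u=(u_\ell)_{\ell\in\mathbb{Z}}$ with $u_{\ell+2N}=u_\ell$ and $\sum_{\ell=-N+1}^{N}u_\ell=0$; $(\mathbf y_F)_\ell=F\epsilon\ell$. For a sequence $\mathbf v$, $v'_\ell=(v_\ell-v_{\ell-1})/\epsilon$, $v''_\ell=(v'_\ell-v'_{\ell-1})/\epsilon$. $\|\mathbf v\|_{\ell^2_\epsilon}=(\epsilon\sum_{\ell=-N+1}^N v_\ell^2)^{1/2}$. $\mu_\epsilon:=\inf_{\Psi\in\mathcal U\setminus\{\mathbf 0\}}\|\Psi''\|_{\ell^2_\epsilon}/\|\Psi'\|_{\ell^2_\epsilon}$, which equals $2\sin(\pi\epsilon/2)/\epsilon$. *)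

(* Defs.v *)
From Stdlib Require Import Reals ZArith List.
From Coquelicot Require Import Coquelicot.
Open Scope R_scope.

Definition sumZ (a b : Z) (f : Z -> R) : R :=
  fold_right Rplus 0
    (map (fun i => f (a + Z.of_nat i)%Z) (seq 0 (Z.to_nat (b - a + 1)))).

Definition sumN (a b : nat) (f : nat -> R) : R :=
  fold_right Rplus 0 (map f (seq a (S b - a))).

Definition eps (N : nat) : R := / INR N.

Definition inU (N : nat) (u : Z -> R) : Prop :=
  (forall l : Z, u (l + 2 * Z.of_nat N)%Z = u l) /\
  sumZ (- Z.of_nat N + 1) (Z.of_nat N) u = 0.

Definition dd (N : nat) (v : Z -> R) : Z -> R :=
  fun l => (v l - v (l - 1)%Z) / eps N.

Definition l2eps (N : nat) (v : Z -> R) : R :=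
  sqrt (eps N * sumZ (- Z.of_nat N + 1) (Z.of_nat N) (fun l => (v l) ^ 2)).

Definition mu_eps (N : nat) : R :=
  real (Glb_Rbar (fun x => exists Psi : Z -> R,
    inU N Psi /\ Psi <> (fun _ => 0) /\
    x = l2eps N (dd N (dd N Psi)) / l2eps N (dd N Psi))).

Definition phi2 (phi : R -> R) (x : R) : R := Derive (Derive phi) x.

Definition stable_atomistic (N s : nat) (phi : R -> R) (F : R) : Prop :=
  forall u : Z -> R, inU N u -> u <> (fun _ => 0) ->
    eps N * sumZ (- Z.of_nat N + 1) (Z.of_nat N) (fun l =>
      sumN 1 s (fun k => phi2 phi (INR k * F) *
        (sumN 0 (k - 1) (fun j => dd N u (l + Z.of_nat j)%Z)) ^ 2)) > 0.

Definition A_sF (s : nat) (phi : R -> R) (F : R) : R :=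
  sumN 1 s (fun k => (INR k) ^ 2 * phi2 phi (INR k * F)).

(* Main.v *)
Require Import Defs.
From Stdlib Require Import Reals ZArith List Lia Lra Psatz FunctionalExtensionality Classical.
From Coquelicot Require Import Coquelicot.
Open Scope R_scope.

Definition sl (n : nat) (g : nat -> R) : R := fold_right Rplus 0 (map g (seq 0 n)).

Lemma sl0 g : sl 0 g = 0. Proof. reflexivity. Qed.

Lemma map_seq_shift (g : nat -> R) a n :
  map g (seq a n) = map (fun i => g (a + i)%nat) (seq 0 n).
Proof.
  revert a g; induction n as [|n IH]; intros a g; simpl; auto.
  rewrite Nat.add_0_r. f_equal. rewrite (IH (S a)), (IH 1%nat).
  apply map_ext; intro i. f_equal. lia.
Qed.

Lemma slS_l n g : sl (S n) g = g 0%nat + sl n (fun i => g (S i)).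
Proof.
  unfold sl; simpl. f_equal. rewrite map_seq_shift. reflexivity.
Qed.

Lemma slS_r n g : sl (S n) g = sl n g + g n.
Proof.
  induction n as [|n IH] in g |- *.
  - unfold sl; simpl; ring.
  - rewrite slS_l, IH, slS_l. ring.
Qed.

Lemma sl_ext n g h : (forall i, (i < n)%nat -> g i = h i) -> sl n g = sl n h.
Proof.
  induction n as [|n IH]; intros H; auto.
  rewrite !slS_r, IH by (intros; apply H; lia). rewrite H by lia. reflexivity.
Qed.

Lemma sl_le n g h : (forall i, (i < n)%nat -> g i <= h i) -> sl n g <= sl n h.
Proof.
  induction n as [|n IH]; intros H; [unfold sl; simpl; lra|].
  rewrite !slS_r. apply Rplus_le_compat; [apply IH; intros; apply H; lia| apply H; lia].
Qed.

Lemma sl_plus n g h : sl n (fun i => g i + h i) = sl n g + sl n h.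
Proof. induction n; [unfold sl; simpl; ring|rewrite !slS_r, IHn; ring]. Qed.

Lemma sl_scal n c g : sl n (fun i => c * g i) = c * sl n g.
Proof. induction n; [unfold sl; simpl; ring|rewrite !slS_r, IHn; ring]. Qed.

Lemma sl_const n c : sl n (fun _ => c) = INR n * c.
Proof. induction n; [unfold sl; simpl; ring|rewrite !slS_r, IHn, S_INR; ring]. Qed.

Lemma sl_exch n m (F : nat -> nat -> R) :
  sl n (fun i => sl m (fun j => F i j)) = sl m (fun j => sl n (fun i => F i j)).
Proof.
  induction n.
  - rewrite sl0. rewrite (sl_ext m _ (fun _ => 0)) by (intros; apply sl0).
    rewrite sl_const; ring.
  - rewrite slS_r, IHn. rewrite <- sl_plus. apply sl_ext; intros. now rewrite slS_r.
Qed.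

Lemma sl_nonneg n g : (forall i, (i < n)%nat -> 0 <= g i) -> 0 <= sl n g.
Proof. intros H. rewrite <- (Rmult_0_r (INR n)), <- sl_const. now apply sl_le. Qed.

Lemma sl_zero_each n g : (forall i, (i < n)%nat -> 0 <= g i) -> sl n g = 0 ->
  forall i, (i < n)%nat -> g i = 0.
Proof.
  induction n; intros H0 H i Hi; [lia|].
  rewrite slS_r in H.
  assert (0 <= sl n g) by (apply sl_nonneg; intros; apply H0; lia).
  assert (0 <= g n) by (apply H0; lia).
  destruct (Nat.eq_dec i n) as [->|]; [lra|].
  apply IHn; [intros; apply H0; lia| lra| lia].
Qed.

Lemma sl_single n g i0 : (i0 < n)%nat -> (forall i, (i < n)%nat -> i <> i0 -> g i = 0) ->
  sl n g = g i0.
Proof.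
  induction n; intros Hi H; [lia|].
  rewrite slS_r. destruct (Nat.eq_dec i0 n) as [->|].
  - rewrite (sl_ext n _ (fun _ => 0)) by (intros; apply H; lia). rewrite sl_const; ring.
  - rewrite IHn by (intros; try apply H; lia). rewrite (H n) by lia. ring.
Qed.

Lemma sl_ge_last n g : (forall i, (i < S n)%nat -> 0 <= g i) -> g n <= sl (S n) g.
Proof. intros H. rewrite slS_r. assert (0 <= sl n g) by (apply sl_nonneg; intros; apply H; lia). lra. Qed.

Lemma sl_id n : sl n (fun i => INR i) = INR n * (INR n - 1) / 2.
Proof. induction n; [rewrite sl0; simpl; field|rewrite slS_r, IHn, S_INR; field]. Qed.

Lemma sl_sq n : sl n (fun i => INR i ^ 2) = (INR n - 1) * INR n * (2 * INR n - 1) / 6.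
Proof. induction n; [rewrite sl0; simpl; field|rewrite slS_r, IHn, S_INR; field]. Qed.

Lemma sl_CS n x : (sl n x) ^ 2 <= INR n * sl n (fun i => x i ^ 2).
Proof.
  induction n; [unfold sl; simpl; lra|].
  rewrite !slS_r, S_INR.
  set (S0 := sl n x) in *. set (Q := sl n (fun i => x i ^ 2)) in *.
  assert (HQ : 0 <= Q) by (apply sl_nonneg; intros; nra).
  assert (Hn : 0 <= INR n) by apply pos_INR.
  destruct (Rle_lt_dec (INR n) 0) as [Hz|Hp].
  - assert (INR n = 0) by lra. rewrite H in IHn. assert (S0 = 0) by nra. rewrite H, H0. nra.
  - assert (2 * S0 * x n <= Q + INR n * x n ^ 2).
    { assert (0 <= (S0 - INR n * x n)^2) by apply pow2_ge_0.
      assert (S0^2 <= INR n * Q) by exact IHn. 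
      apply Rmult_le_reg_l with (INR n); [lra|]. nra. }
    nra.
Qed.
Definition W (N : nat) (f : Z -> R) : R := sumZ (- Z.of_nat N + 1) (Z.of_nat N) f.
Definition inW (N : nat) (l : Z) : Prop := (- Z.of_nat N + 1 <= l <= Z.of_nat N)%Z.
Definition periodic (N : nat) (f : Z -> R) : Prop := forall l, f (l + 2 * Z.of_nat N)%Z = f l.

Lemma W_sl N f : W N f = sl (2 * N) (fun i => f (- Z.of_nat N + 1 + Z.of_nat i)%Z).
Proof.
  unfold W, sumZ, sl.
  replace (Z.to_nat (Z.of_nat N - (- Z.of_nat N + 1) + 1)) with (2 * N)%nat by lia.
  reflexivity.
Qed.

Lemma W_ext N f g : (forall l, inW N l -> f l = g l) -> W N f = W N g.
Proof. intros H; rewrite !W_sl; apply sl_ext; intros; apply H; unfold inW; lia. Qed.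

Lemma W_le N f g : (forall l, inW N l -> f l <= g l) -> W N f <= W N g.
Proof. intros H; rewrite !W_sl; apply sl_le; intros; apply H; unfold inW; lia. Qed.

Lemma W_plus N f g : W N (fun l => f l + g l) = W N f + W N g.
Proof. rewrite !W_sl; apply sl_plus. Qed.

Lemma W_scal N c f : W N (fun l => c * f l) = c * W N f.
Proof. rewrite !W_sl; apply sl_scal. Qed.

Lemma W_const N c : W N (fun _ => c) = 2 * INR N * c.
Proof. rewrite W_sl, sl_const, mult_INR. simpl. ring. Qed.

Lemma W_opp N f : W N (fun l => - f l) = - W N f.
Proof. rewrite <- (W_ext N (fun l => -1 * f l)) by (intros; ring). rewrite W_scal; ring. Qed.

Lemma W_minus N f g : W N (fun l => f l - g l) = W N f - W N g.
Proof. unfold Rminus. rewrite W_plus, W_opp. ring. Qed.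

Lemma W_nonneg N f : (forall l, inW N l -> 0 <= f l) -> 0 <= W N f.
Proof. intros H; rewrite W_sl; apply sl_nonneg; intros; apply H; unfold inW; lia. Qed.

Lemma W_exch N M (F : Z -> Z -> R) :
  W N (fun l => W M (fun m => F l m)) = W M (fun m => W N (fun l => F l m)).
Proof.
  rewrite W_sl. rewrite (sl_ext _ _ (fun i => sl (2*M) (fun j => F (- Z.of_nat N + 1 + Z.of_nat i)%Z (- Z.of_nat M + 1 + Z.of_nat j)%Z)))
    by (intros; apply W_sl).
  rewrite sl_exch, W_sl. apply sl_ext; intros. now rewrite W_sl.
Qed.

Lemma W_sl_exch N n (F : nat -> Z -> R) :
  W N (fun l => sl n (fun i => F i l)) = sl n (fun i => W N (F i)).
Proof.
  rewrite W_sl. rewrite sl_exch. apply sl_ext; intros. now rewrite W_sl.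
Qed.

Lemma W_zero_each N f : (forall l, inW N l -> 0 <= f l) -> W N f = 0 ->
  forall l, inW N l -> f l = 0.
Proof.
  intros H0 H l Hl. rewrite W_sl in H.
  assert (E : forall i, (i < 2*N)%nat -> f (- Z.of_nat N + 1 + Z.of_nat i)%Z = 0).
  { apply (sl_zero_each _ (fun i => f (- Z.of_nat N + 1 + Z.of_nat i)%Z)); [intros; apply H0; unfold inW; lia| exact H]. }
  unfold inW in Hl.
  replace l with (- Z.of_nat N + 1 + Z.of_nat (Z.to_nat (l + Z.of_nat N - 1)))%Z by lia.
  apply E. lia.
Qed.

Lemma W_single N f l0 : inW N l0 -> (forall l, inW N l -> l <> l0 -> f l = 0) -> W N f = f l0.
Proof.
  intros Hl H. rewrite W_sl. unfold inW in Hl.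
  rewrite (sl_single _ _ (Z.to_nat (l0 + Z.of_nat N - 1))).
  - f_equal. lia.
  - lia.
  - intros i Hi Hne. apply H; unfold inW; lia.
Qed.

Lemma W_shift1 N f : (1 <= N)%nat -> periodic N f -> W N (fun l => f (l + 1)%Z) = W N f.
Proof.
  intros HN Hp. rewrite !W_sl.
  destruct (2 * N)%nat as [|n] eqn:E; [lia|].
  rewrite slS_r, slS_l. 
  assert (f (- Z.of_nat N + 1 + Z.of_nat n + 1)%Z = f (- Z.of_nat N + 1 + Z.of_nat 0)%Z) as ->.
  { rewrite <- (Hp (- Z.of_nat N + 1 + Z.of_nat 0)%Z). f_equal. lia. }
  rewrite Rplus_comm. f_equal. apply sl_ext; intros. f_equal. lia.
Qed.

Lemma periodic_shift N f d : periodic N f -> periodic N (fun l => f (l + d)%Z).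
Proof. intros H l. cbv beta. rewrite <- (H (l + d)%Z). f_equal. lia. Qed.

Lemma W_shift_nat N f (n : nat) : (1 <= N)%nat -> periodic N f ->
  W N (fun l => f (l + Z.of_nat n)%Z) = W N f.
Proof.
  intros HN Hp. induction n.
  - apply W_ext; intros; f_equal; lia.
  - rewrite <- IHn. rewrite <- (W_shift1 N (fun l => f (l + Z.of_nat n)%Z)) by (auto; now apply periodic_shift).
    apply W_ext; intros; f_equal; lia.
Qed.

Lemma W_shift N f d : (1 <= N)%nat -> periodic N f -> W N (fun l => f (l + d)%Z) = W N f.
Proof.
  intros HN Hp. destruct (Z_le_gt_dec 0 d).
  - replace d with (Z.of_nat (Z.to_nat d)) by lia. now apply W_shift_nat.
  - symmetry. rewrite <- (W_shift_nat N (fun l => f (l + d)%Z) (Z.to_nat (- d))) by (auto; now apply periodic_shift).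
    apply W_ext; intros; f_equal; lia.
Qed.

Lemma periodic_nat N f (n : nat) : periodic N f -> forall l, f (l + 2 * Z.of_nat N * Z.of_nat n)%Z = f l.
Proof.
  intros H. induction n; intro l.
  - f_equal; lia.
  - rewrite <- (IHn l). rewrite <- (H (l + 2 * Z.of_nat N * Z.of_nat n)%Z). f_equal. lia.
Qed.

Lemma periodic_zero N f : (1 <= N)%nat -> periodic N f -> (forall l, inW N l -> f l = 0) -> forall l, f l = 0.
Proof.
  intros HN Hp H l.
  set (M := (2 * Z.of_nat N)%Z).
  assert (HM : (0 < M)%Z) by lia.
  set (r := ((l + Z.of_nat N - 1) mod M)%Z). set (q := ((l + Z.of_nat N - 1) / M)%Z).
  assert (Hr := Z.mod_pos_bound (l + Z.of_nat N - 1) M HM).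
  assert (Hd := Z.div_mod (l + Z.of_nat N - 1) M ltac:(lia)).
  fold r q in Hr, Hd.
  destruct (Z_le_gt_dec 0 q).
  - replace l with ((r - Z.of_nat N + 1) + 2 * Z.of_nat N * Z.of_nat (Z.to_nat q))%Z by (subst M; lia).
    rewrite periodic_nat by auto. apply H. unfold inW. subst M; lia.
  - rewrite <- (periodic_nat N f (Z.to_nat (- q)) Hp l).
    apply H. unfold inW. subst M. nia.
Qed.

Lemma cosZ x m : cos (x + 2 * IZR m * PI) = cos x.
Proof.
  destruct (Z_le_gt_dec 0 m).
  - replace m with (Z.of_nat (Z.to_nat m)) by lia. rewrite <- INR_IZR_INZ. apply cos_period.
  - rewrite <- (cos_period (x + 2 * IZR m * PI) (Z.to_nat (- m))). f_equal.
    rewrite INR_IZR_INZ, Z2Nat.id by lia. rewrite opp_IZR. ring.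
Qed.

Lemma sinZ x m : sin (x + 2 * IZR m * PI) = sin x.
Proof.
  destruct (Z_le_gt_dec 0 m).
  - replace m with (Z.of_nat (Z.to_nat m)) by lia. rewrite <- INR_IZR_INZ. apply sin_period.
  - rewrite <- (sin_period (x + 2 * IZR m * PI) (Z.to_nat (- m))). f_equal.
    rewrite INR_IZR_INZ, Z2Nat.id by lia. rewrite opp_IZR. ring.
Qed.

Lemma INR_pos N : (1 <= N)%nat -> 0 < INR N.
Proof. intros; apply lt_0_INR; lia. Qed.

Lemma IZR_addN l N : IZR (l + 2 * Z.of_nat N) = IZR l + 2 * INR N.
Proof. rewrite plus_IZR, mult_IZR, INR_IZR_INZ. reflexivity. Qed.

Lemma cos_ne_1 a : -2 * PI < a < 2 * PI -> a <> 0 -> cos a <> 1.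
Proof.
  intros H Hne Hc.
  replace a with (2 * (a/2)) in Hc by field. rewrite cos_2a_sin in Hc.
  assert (sin (a/2) = 0) by nra.
  destruct (Rlt_dec 0 a).
  - assert (0 < sin (a/2)) by (apply sin_gt_0; lra). lra.
  - assert (0 < sin (- (a/2))) by (apply sin_gt_0; lra). rewrite sin_neg in H1. lra.
Qed.

Lemma kernel N d : (1 <= N)%nat -> d <> 0%Z -> (- 2 * Z.of_nat N < d < 2 * Z.of_nat N)%Z ->
  W N (fun m => cos (PI * IZR m / INR N * IZR d)) = 0.
Proof.
  intros HN Hd Hb.
  set (al := PI * IZR d / INR N).
  assert (HNp := INR_pos N HN).
  set (g := fun m => cos (al * IZR m)).
  assert (E : W N (fun m => cos (PI * IZR m / INR N * IZR d)) = W N g).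
  { apply W_ext; intros; unfold g, al. f_equal. field. lra. }
  rewrite E.
  assert (Hp : periodic N g).
  { intro m. unfold g. rewrite IZR_addN. rewrite <- (cosZ (al * IZR m) d). f_equal. unfold al. field. lra. }
  assert (E1 := W_shift N g 1 HN Hp). assert (E2 := W_shift N g (-1) HN Hp).
  assert (E3 : W N (fun m => g (m + 1)%Z + g (m + -1)%Z) = 2 * cos al * W N g).
  { rewrite <- W_scal. apply W_ext; intros. unfold g. rewrite !plus_IZR.
    replace (al * (IZR l + IZR 1)) with (al * IZR l + al) by (simpl; ring).
    replace (al * (IZR l + IZR (-1))) with (al * IZR l - al) by (simpl; ring).
    rewrite cos_plus, cos_minus. ring. }
  rewrite W_plus, E1, E2 in E3.
  assert (cos al <> 1).
  { apply cos_ne_1.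
    - assert (IZR (- 2 * Z.of_nat N) < IZR d < IZR (2 * Z.of_nat N)) as [H1 H2] by (split; apply IZR_lt; lia).
      rewrite mult_IZR, <- INR_IZR_INZ in H1, H2. simpl in H1, H2.
      assert (Ha : al * INR N = PI * IZR d) by (unfold al; field; lra).
      assert (PI > 0) by apply PI_RGT_0. split.
      + apply Rmult_lt_reg_r with (INR N); auto. rewrite Ha. nra.
      + apply Rmult_lt_reg_r with (INR N); auto. rewrite Ha. nra.
    - unfold al. assert (PI > 0) by apply PI_RGT_0. assert (IZR d <> 0) by (apply not_0_IZR; auto).
      unfold Rdiv. apply Rmult_integral_contrapositive; split; [apply Rmult_integral_contrapositive; split; lra|].
      apply Rinv_neq_0_compat; lra. }
  assert ((1 - cos al) * W N g = 0) by lra.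
  apply Rmult_integral in H0. destruct H0; [exfalso; lra | auto].
Qed.

Lemma kernel0 N : W N (fun m => cos (PI * IZR m / INR N * IZR 0)) = 2 * INR N.
Proof. rewrite (W_ext _ _ (fun _ => 1)) by (intros; rewrite Rmult_0_r; apply cos_0). rewrite W_const; ring. Qed.

Lemma W_mult N f g : W N f * W N g = W N (fun l => W N (fun l' => f l * g l')).
Proof.
  rewrite Rmult_comm, <- W_scal. apply W_ext; intros. rewrite Rmult_comm, <- W_scal. apply W_ext; intros. ring.
Qed.

Definition th N (m : Z) := PI * IZR m / INR N.
Definition af N (v : Z -> R) m := W N (fun l => v l * cos (th N m * IZR l)).
Definition bf N (v : Z -> R) m := W N (fun l => v l * sin (th N m * IZR l)).

Lemma parseval N v : (1 <= N)%nat ->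
  W N (fun m => af N v m ^ 2 + bf N v m ^ 2) = 2 * INR N * W N (fun l => v l ^ 2).
Proof.
  intros HN. assert (HNp := INR_pos N HN).
  transitivity (W N (fun m => W N (fun l => W N (fun l' => v l * v l' * cos (PI * IZR m / INR N * IZR (l - l')))))).
  { apply W_ext; intros m _. unfold af, bf.
    rewrite <- !Rsqr_pow2. unfold Rsqr. rewrite !W_mult, <- W_plus.
    apply W_ext; intros l _. rewrite <- W_plus. apply W_ext; intros l' _.
    rewrite minus_IZR. unfold th.
    replace (PI * IZR m / INR N * (IZR l - IZR l')) with (PI * IZR m / INR N * IZR l - PI * IZR m / INR N * IZR l') by ring.
    rewrite cos_minus. ring. }
  rewrite W_exch.
  rewrite (W_ext _ _ (fun l => W N (fun l' => W N (fun m => v l * v l' * cos (PI * IZR m / INR N * IZR (l - l'))))))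
    by (intros; apply W_exch).
  rewrite <- W_scal. apply W_ext; intros l Hl.
  rewrite (W_single N _ l Hl).
  - rewrite W_scal. rewrite Z.sub_diag, kernel0. ring.
  - intros l' Hl' Hne. rewrite W_scal. rewrite kernel; [ring|auto|lia|unfold inW in *; lia].
Qed.

Lemma th_per N m l : (1 <= N)%nat -> th N m * IZR (l + 2 * Z.of_nat N) = th N m * IZR l + 2 * IZR m * PI.
Proof. intros HN. assert (HNp := INR_pos N HN). rewrite IZR_addN. unfold th. field. lra. Qed.

Lemma af_shift N v m : (1 <= N)%nat -> periodic N v ->
  W N (fun l => v (l - 1)%Z * cos (th N m * IZR l)) = cos (th N m) * af N v m - sin (th N m) * bf N v m.
Proof.
  intros HN Hp. set (h := fun l => v (l - 1)%Z * cos (th N m * IZR l)).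
  assert (Hh : periodic N h).
  { intro l. unfold h. rewrite th_per, cosZ by auto. f_equal. rewrite <- (Hp (l - 1)%Z). f_equal. lia. }
  rewrite <- (W_shift N h 1 HN Hh). unfold af, bf. unfold Rminus. rewrite <- !W_scal, <- W_opp, <- W_plus.
  apply W_ext; intros l _. unfold h. rewrite plus_IZR.
  replace (l + 1 - 1)%Z with l by lia. rewrite Rmult_plus_distr_l, Rmult_1_r, cos_plus. ring.
Qed.

Lemma bf_shift N v m : (1 <= N)%nat -> periodic N v ->
  W N (fun l => v (l - 1)%Z * sin (th N m * IZR l)) = sin (th N m) * af N v m + cos (th N m) * bf N v m.
Proof.
  intros HN Hp. set (h := fun l => v (l - 1)%Z * sin (th N m * IZR l)).
  assert (Hh : periodic N h).
  { intro l. unfold h. rewrite th_per, sinZ by auto. f_equal. rewrite <- (Hp (l - 1)%Z). f_equal. lia. }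
  rewrite <- (W_shift N h 1 HN Hh). unfold af, bf. rewrite <- !W_scal, <- W_plus.
  apply W_ext; intros l _. unfold h. rewrite plus_IZR.
  replace (l + 1 - 1)%Z with l by lia. rewrite Rmult_plus_distr_l, Rmult_1_r, sin_plus. ring.
Qed.

Lemma cos_th_le_pos N m : (1 <= N)%nat -> (1 <= m <= Z.of_nat N)%Z -> cos (th N m) <= cos (PI / INR N).
Proof.
  intros HN Hm. assert (HNp := INR_pos N HN). assert (PI > 0) by apply PI_RGT_0.
  assert (1 <= IZR m <= INR N) as [H1 H2].
  { rewrite INR_IZR_INZ. split; apply IZR_le; lia. }
  assert (Et : th N m = PI / INR N * IZR m) by (unfold th; field; lra).
  assert (0 < PI / INR N) by (apply Rdiv_lt_0_compat; lra).
  assert (PI / INR N * INR N = PI) by (field; lra).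
  apply cos_decr_1; rewrite ?Et; nra.
Qed.

Lemma cos_th_le N m : (1 <= N)%nat -> inW N m -> m <> 0%Z -> cos (th N m) <= cos (PI / INR N).
Proof.
  intros HN Hm Hne. unfold inW in Hm. destruct (Z_lt_le_dec 0 m).
  - apply cos_th_le_pos; auto; lia.
  - rewrite <- cos_neg. replace (- th N m) with (th N (- m)) by (unfold th; rewrite opp_IZR; field; apply Rgt_not_eq, INR_pos; auto).
    apply cos_th_le_pos; auto; lia.
Qed.

Lemma wirtinger N v : (1 <= N)%nat -> periodic N v -> W N v = 0 ->
  W N (fun l => (v l - v (l - 1)%Z) ^ 2) >= (2 - 2 * cos (PI / INR N)) * W N (fun l => v l ^ 2).
Proof.
  intros HN Hp H0. assert (HNp := INR_pos N HN).
  set (w := fun l => v l - v (l - 1)%Z).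
  assert (Hw : periodic N w).
  { intro l. unfold w. rewrite Hp. f_equal. rewrite <- (Hp (l - 1)%Z). f_equal. lia. }
  assert (Hpw := parseval N w HN).
  assert (E : forall m, af N w m ^ 2 + bf N w m ^ 2 = (2 - 2 * cos (th N m)) * (af N v m ^ 2 + bf N v m ^ 2)).
  { intro m. assert (Ea : af N w m = af N v m - (cos (th N m) * af N v m - sin (th N m) * bf N v m)).
    { rewrite <- af_shift by auto. unfold af. unfold w. rewrite <- W_minus. apply W_ext; intros; ring. }
    assert (Eb : bf N w m = bf N v m - (sin (th N m) * af N v m + cos (th N m) * bf N v m)).
    { rewrite <- bf_shift by auto. unfold bf. unfold w. rewrite <- W_minus. apply W_ext; intros; ring. }
    rewrite Ea, Eb. set (a := af N v m). set (b := bf N v m). set (c := cos (th N m)). set (s := sin (th N m)).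
    assert (Hcs : s ^ 2 + c ^ 2 = 1) by (unfold s, c; rewrite <- !Rsqr_pow2; apply sin2_cos2).
    transitivity ((2 - 2 * c) * (a ^ 2 + b ^ 2) + (a ^ 2 + b ^ 2) * (s ^ 2 + c ^ 2 - 1)); [ring|].
    rewrite Hcs. ring. }
  assert (Hle : W N (fun m => (2 - 2 * cos (PI / INR N)) * (af N v m ^ 2 + bf N v m ^ 2)) <=
                W N (fun m => af N w m ^ 2 + bf N w m ^ 2)).
  { apply W_le; intros m Hm. rewrite E. destruct (Z.eq_dec m 0) as [->|Hne].
    - assert (af N v 0 = 0). { unfold af. rewrite <- H0. apply W_ext; intros. unfold th. simpl. 
        replace (PI * 0 / INR N * IZR l) with 0 by (field; lra). rewrite cos_0; ring. }
      assert (bf N v 0 = 0). { unfold bf. rewrite <- (Rmult_0_l (W N v)), <- W_scal. apply W_ext; intros. unfold th. simpl. 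
        replace (PI * 0 / INR N * IZR l) with 0 by (field; lra). rewrite sin_0; ring. }
      rewrite H, H1. nra.
    - assert (cos (th N m) <= cos (PI / INR N)) by (apply cos_th_le; auto).
      assert (0 <= af N v m ^ 2 + bf N v m ^ 2) by nra. nra. }
  rewrite W_scal, parseval, Hpw in Hle by auto.
  apply Rle_ge. apply Rmult_le_reg_l with (2 * INR N); [lra|]. unfold w in Hle. nra.
Qed.

Section Corr.
Variable N : nat.
Variable v : Z -> R.
Hypothesis HN : (1 <= N)%nat.
Hypothesis Hp : periodic N v.

Let V := W N (fun l => v l ^ 2).
Let D := W N (fun l => (v l - v (l - 1)%Z) ^ 2).

Definition Sk (k : nat) (l : Z) := sl k (fun j => v (l + Z.of_nat j)%Z).
Definition Tk (k : nat) := W N (fun l => Sk k l ^ 2).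
Definition G (j k : nat) := W N (fun l => (v (l + Z.of_nat j)%Z - v (l + Z.of_nat k)%Z) ^ 2).
Definition H (k : nat) := sl k (fun j => G j k).

Lemma per_sq (f : Z -> R) : periodic N f -> periodic N (fun l => f l ^ 2).
Proof. intros Hf l. cbv beta. now rewrite Hf. Qed.

Lemma V_shift d : W N (fun l => v (l + d)%Z ^ 2) = V.
Proof. apply (W_shift N (fun l => v l ^ 2)); auto. now apply per_sq. Qed.

Lemma telesc d l : v (l + Z.of_nat d)%Z - v l = sl d (fun i => v (l + Z.of_nat i + 1)%Z - v (l + Z.of_nat i)%Z).
Proof.
  induction d.
  - rewrite sl0. replace (l + Z.of_nat 0)%Z with l by lia. ring.
  - rewrite slS_r, <- IHd. replace (l + Z.of_nat (S d))%Z with (l + Z.of_nat d + 1)%Z by lia. ring.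
Qed.

Lemma D_shift d : W N (fun l => (v (l + d + 1)%Z - v (l + d)%Z) ^ 2) = D.
Proof.
  set (g := fun l => (v l - v (l - 1)%Z) ^ 2).
  assert (Hg : periodic N g).
  { intro l. unfold g. rewrite Hp. f_equal. f_equal. rewrite <- (Hp (l - 1)%Z). f_equal. lia. }
  transitivity (W N g); [|reflexivity].
  rewrite <- (W_shift N g (d + 1) HN Hg). apply W_ext; intros. unfold g. do 3 f_equal; lia.
Qed.

Lemma E_bound (d : nat) : W N (fun l => (v (l + Z.of_nat d)%Z - v l) ^ 2) <= INR d ^ 2 * D.
Proof.
  eapply Rle_trans.
  { apply W_le. intros l _. rewrite telesc. apply sl_CS. }
  rewrite W_scal, W_sl_exch.
  rewrite (sl_ext _ _ (fun _ => D)) by (intros; apply D_shift).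
  rewrite sl_const. lra.
Qed.

Lemma G_eq j k : (j <= k)%nat -> G j k = W N (fun l => (v (l + Z.of_nat (k - j))%Z - v l) ^ 2).
Proof.
  intros Hjk. unfold G.
  set (f := fun l => (v (l + Z.of_nat (k - j))%Z - v l) ^ 2).
  assert (Hf : periodic N f).
  { intro l. unfold f. rewrite Hp. f_equal. f_equal. rewrite <- (Hp (l + Z.of_nat (k - j))%Z). f_equal. lia. }
  rewrite <- (W_shift N f (Z.of_nat j) HN Hf). apply W_ext; intros. unfold f.
  replace (l + Z.of_nat j + Z.of_nat (k - j))%Z with (l + Z.of_nat k)%Z by lia. ring.
Qed.

Lemma G_nonneg j k : 0 <= G j k.
Proof. unfold G. apply W_nonneg; intros. apply pow2_ge_0. Qed.

Lemma G_last k : G k (S k) = D.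
Proof.
  rewrite G_eq by lia. replace (S k - k)%nat with 1%nat by lia.
  rewrite <- (D_shift 0). apply W_ext; intros. replace (l + 0 + 1)%Z with (l + Z.of_nat 1)%Z by lia.
  replace (l + 0)%Z with l by lia. reflexivity.
Qed.

Lemma H_ge k : (1 <= k)%nat -> D <= H k.
Proof.
  intros Hk. destruct k as [|k]; [lia|]. unfold H. rewrite <- (G_last k). apply (sl_ge_last k (fun j => G j (S k))).
  intros; apply G_nonneg.
Qed.

Lemma sum_sq_diff k : sl k (fun j => (INR k - INR j) ^ 2) = INR k * (INR k + 1) * (2 * INR k + 1) / 6.
Proof.
  rewrite (sl_ext _ _ (fun j => (INR k ^ 2 + (- 2 * INR k) * INR j) + INR j ^ 2)) by (intros; ring).
  rewrite !sl_plus, sl_scal, sl_const, sl_id, sl_sq. field.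
Qed.

Lemma H_le k : H k <= INR k * (INR k + 1) * (2 * INR k + 1) / 6 * D.
Proof.
  unfold H. rewrite <- sum_sq_diff. rewrite Rmult_comm, <- sl_scal. apply sl_le; intros j Hj.
  rewrite G_eq by lia. eapply Rle_trans; [apply E_bound|]. rewrite minus_INR by lia. lra.
Qed.

Lemma T_rec k : Tk (S k) = Tk k + (2 * INR k + 1) * V - H k.
Proof.
  unfold Tk. 
  rewrite (W_ext _ _ (fun l => Sk k l ^ 2 + 2 * (Sk k l * v (l + Z.of_nat k)%Z) + v (l + Z.of_nat k)%Z ^ 2)).
  2:{ intros l _. unfold Sk. rewrite slS_r. ring. }
  rewrite !W_plus, W_scal, V_shift.
  assert (E : W N (fun l => Sk k l * v (l + Z.of_nat k)%Z) = INR k * V - H k / 2).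
  { unfold Sk. rewrite (W_ext _ _ (fun l => sl k (fun j => v (l + Z.of_nat j)%Z * v (l + Z.of_nat k)%Z))).
    2:{ intros. rewrite Rmult_comm, <- sl_scal. apply sl_ext; intros; ring. }
    rewrite W_sl_exch.
    assert (Ek : sl k (fun j => V + (- / 2) * G j k) = INR k * V - H k / 2)
      by (rewrite sl_plus, sl_scal, sl_const; unfold H; field).
    rewrite <- Ek.
    apply sl_ext; intros j _. unfold G.
    rewrite (W_ext _ _ (fun l => / 2 * v (l + Z.of_nat j)%Z ^ 2 + / 2 * v (l + Z.of_nat k)%Z ^ 2 + (- / 2) * (v (l + Z.of_nat j)%Z - v (l + Z.of_nat k)%Z) ^ 2))
      by (intros; field).
    rewrite !W_plus, !W_scal, !V_shift. field. }
  rewrite E. field.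
Qed.

Lemma T0 : Tk 0 = 0.
Proof. unfold Tk, Sk. rewrite (W_ext _ _ (fun _ => 0)) by (intros; rewrite sl0; ring). rewrite W_const; ring. Qed.

Lemma D_nonneg : 0 <= D.
Proof. apply W_nonneg; intros; apply pow2_ge_0. Qed.

Lemma T_ub k : (1 <= k)%nat -> Tk k <= INR k ^ 2 * V - (INR k - 1) * D.
Proof.
  induction k; intros Hk; [lia|].
  rewrite T_rec, S_INR. destruct k.
  - rewrite T0. unfold H. rewrite sl0. simpl. lra.
  - assert (IH := IHk ltac:(lia)). assert (Hh := H_ge (S k) ltac:(lia)). nra.
Qed.

Lemma T_lb k : INR k ^ 2 * V - (INR k ^ 4 - INR k ^ 2) / 12 * D <= Tk k.
Proof.
  induction k.
  - rewrite T0. simpl. lra.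
  - rewrite T_rec, S_INR. assert (Hh := H_le k). 
    assert (E : (INR k + 1) ^ 2 * V - ((INR k + 1) ^ 4 - (INR k + 1) ^ 2) / 12 * D =
                INR k ^ 2 * V - (INR k ^ 4 - INR k ^ 2) / 12 * D + (2 * INR k + 1) * V
                - INR k * (INR k + 1) * (2 * INR k + 1) / 6 * D) by field.
    rewrite E. lra.
Qed.

End Corr.

Lemma eps_pos N : (1 <= N)%nat -> 0 < eps N.
Proof. intros; unfold eps; apply Rinv_0_lt_compat, INR_pos; auto. Qed.

Lemma dd_periodic N u : periodic N u -> periodic N (dd N u).
Proof.
  intros Hp l. unfold dd. rewrite Hp. f_equal. f_equal. rewrite <- (Hp (l - 1)%Z). f_equal. lia.
Qed.

Lemma dd_sum0 N u : (1 <= N)%nat -> periodic N u -> W N (dd N u) = 0.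
Proof.
  intros HN Hp. unfold dd.
  rewrite (W_ext _ _ (fun l => / eps N * (u l - u (l - 1)%Z))) by (intros; unfold Rdiv; ring).
  rewrite W_scal, W_minus.
  assert (Es : W N (fun l => u (l - 1)%Z) = W N u).
  { rewrite <- (W_shift N u (-1) HN Hp). apply W_ext; intros; f_equal; lia. }
  rewrite Es. ring.
Qed.

Lemma const_all (u : Z -> R) : (forall l, u l = u (l - 1)%Z) -> forall l, u l = u 0%Z.
Proof.
  intros H.
  assert (Hp : forall n : nat, u (Z.of_nat n) = u 0%Z /\ u (- Z.of_nat n)%Z = u 0%Z).
  { induction n as [|n [IH1 IH2]]; [split; f_equal; lia|split].
    - rewrite H. rewrite <- IH1. f_equal. lia.
    - rewrite <- IH2. rewrite (H (- Z.of_nat n)%Z). f_equal. lia. }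
  intro l. destruct (Z_le_gt_dec 0 l).
  - replace l with (Z.of_nat (Z.to_nat l)) by lia. apply Hp.
  - replace l with (- Z.of_nat (Z.to_nat (- l)))%Z by lia. apply Hp.
Qed.

Lemma V_pos N u : (1 <= N)%nat -> inU N u -> u <> (fun _ => 0) -> 0 < W N (fun l => dd N u l ^ 2).
Proof.
  intros HN [Hp Hs] Hne.
  assert (H0 : 0 <= W N (fun l => dd N u l ^ 2)) by (apply W_nonneg; intros; apply pow2_ge_0).
  destruct H0 as [|H0]; auto. exfalso. apply Hne.
  assert (Z1 : forall l, inW N l -> dd N u l ^ 2 = 0)
    by (apply W_zero_each; auto; intros; apply pow2_ge_0).
  assert (Z2 : forall l, dd N u l = 0).
  { apply (periodic_zero N); auto. apply dd_periodic; auto. intros l Hl. apply Z1 in Hl. nra. }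
  assert (He := eps_pos N HN).
  assert (Z3 : forall l, u l = u (l - 1)%Z).
  { intro l. specialize (Z2 l). unfold dd in Z2. unfold Rdiv in Z2.
    apply Rmult_integral in Z2. destruct Z2 as [Z2|Z2]; [lra|].
    exfalso. apply (Rinv_neq_0_compat (eps N)); lra. }
  assert (Hc := const_all u Z3).
  assert (Hu0 : u 0%Z = 0).
  { fold (W N u) in Hs. rewrite (W_ext _ _ (fun _ => u 0%Z)) in Hs by (intros; apply Hc).
    rewrite W_const in Hs. assert (HNp := INR_pos N HN). nra. }
  apply functional_extensionality. intro l. rewrite Hc. auto.
Qed.

Lemma rec_D N v c : (1 <= N)%nat -> periodic N v ->
  (forall l, v (l + 1)%Z + v (l - 1)%Z = 2 * c * v l) ->
  W N (fun l => (v l - v (l - 1)%Z) ^ 2) = (2 - 2 * c) * W N (fun l => v l ^ 2).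
Proof.
  intros HN Hp Hr.
  set (h := fun l => v l * v (l - 1)%Z).
  assert (Hh : periodic N h).
  { intro l. unfold h. rewrite Hp. f_equal. rewrite <- (Hp (l - 1)%Z). f_equal. lia. }
  assert (E1 : W N (fun l => h (l + 1)%Z) = W N h) by (apply W_shift; auto).
  assert (E2 : W N (fun l => v (l + -1)%Z ^ 2) = W N (fun l => v l ^ 2)).
  { apply (W_shift N (fun l => v l ^ 2)); auto. intro l. cbv beta. now rewrite Hp. }
  assert (E3 : W N (fun l => v l * (v (l + 1)%Z + v (l - 1)%Z)) = 2 * c * W N (fun l => v l ^ 2)).
  { rewrite <- W_scal. apply W_ext; intros. rewrite Hr. ring. }
  rewrite (W_ext _ _ (fun l => h (l + 1)%Z + h l)) in E3.
  2:{ intros. unfold h. replace (l + 1 - 1)%Z with l by lia. ring. }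
  rewrite W_plus, E1 in E3.
  rewrite (W_ext _ _ (fun l => v l ^ 2 + v (l + -1)%Z ^ 2 + (-2) * h l)).
  2:{ intros. unfold h. replace (l + -1)%Z with (l - 1)%Z by lia. ring. }
  rewrite !W_plus, W_scal, E2. lra.
Qed.

Lemma rec_dd N u c : (forall l, u (l + 1)%Z + u (l - 1)%Z = 2 * c * u l) ->
  forall l, dd N u (l + 1)%Z + dd N u (l - 1)%Z = 2 * c * dd N u l.
Proof.
  intros Hr l. unfold dd. replace (l + 1 - 1)%Z with l by lia.
  assert (Hr2 := Hr (l - 1)%Z). replace (l - 1 + 1)%Z with l in Hr2 by lia.
  assert (Hr1 := Hr l).
  unfold Rdiv. 
  replace (u (l + 1)%Z) with (2 * c * u l - u (l - 1)%Z) by lra.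
  replace (u (l - 1 - 1)%Z) with (2 * c * u (l - 1)%Z - u l) by lra. ring.
Qed.

Definition psi1 (N : nat) (l : Z) : R := cos (PI / INR N * IZR l).

Lemma psi1_U N : (1 <= N)%nat -> inU N (psi1 N).
Proof.
  intros HN. assert (HNp := INR_pos N HN). split.
  - intro l. unfold psi1. rewrite IZR_addN. rewrite <- (cosZ (PI / INR N * IZR l) 1). f_equal. field. lra.
  - fold (W N (psi1 N)). rewrite <- (kernel N 1 HN) by lia. apply W_ext; intros. unfold psi1. f_equal. field. lra.
Qed.

Lemma psi1_ne N : psi1 N <> (fun _ => 0).
Proof.
  intro H. assert (H0 := f_equal (fun f => f 0%Z) H). simpl in H0. unfold psi1 in H0.
  rewrite Rmult_0_r, cos_0 in H0. lra.
Qed.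

Lemma psi1_rec N : forall l, psi1 N (l + 1)%Z + psi1 N (l - 1)%Z = 2 * cos (PI / INR N) * psi1 N l.
Proof.
  intros l. unfold psi1. rewrite plus_IZR, minus_IZR.
  rewrite !Rmult_plus_distr_l, Rmult_minus_distr_l, Rmult_1_r, cos_plus, cos_minus. ring.
Qed.

Lemma sumN_0 k f : (1 <= k)%nat -> sumN 0 (k - 1) f = sl k f.
Proof. intros Hk. unfold sumN, sl. replace (S (k - 1) - 0)%nat with k by lia. reflexivity. Qed.

Lemma sumN_1 s f : sumN 1 s f = sl s (fun i => f (S i)).
Proof. unfold sumN, sl. replace (S s - 1)%nat with s by lia. rewrite map_seq_shift. reflexivity. Qed.

Lemma sumN_2 s f : (2 <= s)%nat -> sumN 1 s f = f 1%nat + sumN 2 s f.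
Proof.
  intros Hs. rewrite sumN_1. destruct s as [|s]; [lia|]. rewrite slS_l. f_equal.
  unfold sumN, sl. replace (S (S s) - 2)%nat with s by lia. rewrite (map_seq_shift f 2). reflexivity.
Qed.

Lemma sumN_3 s f : (2 <= s)%nat -> sumN 2 s f = f 2%nat + sumN 3 s f.
Proof.
  intros Hs. unfold sumN, sl. destruct s as [|[|s]]; try lia.
  replace (S (S (S s)) - 2)%nat with (S s) by lia. replace (S (S (S s)) - 3)%nat with s by lia.
  simpl. reflexivity.
Qed.

Lemma T1 N v : (1 <= N)%nat -> periodic N v -> Tk N v 1 = W N (fun l => v l ^ 2).
Proof.
  intros HN Hp. assert (H1 := T_ub N v HN Hp 1 (le_n 1)). assert (H2 := T_lb N v HN Hp 1).
  simpl INR in H1, H2. lra.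
Qed.

Lemma Qlow N s p v : (1 <= N)%nat -> periodic N v -> (forall k, (2 <= k <= s)%nat -> p k <= 0) ->
  sl s (fun i => INR (S i) ^ 2 * p (S i)) * W N (fun l => v l ^ 2)
  - sl s (fun i => (INR (S i) - 1) * p (S i)) * W N (fun l => (v l - v (l - 1)%Z) ^ 2)
  <= sl s (fun i => p (S i) * Tk N v (S i)).
Proof.
  intros HN Hp Hneg. set (V := W N (fun l => v l ^ 2)). set (D := W N (fun l => (v l - v (l - 1)%Z) ^ 2)).
  assert (E : sl s (fun i => INR (S i) ^ 2 * p (S i)) * V - sl s (fun i => (INR (S i) - 1) * p (S i)) * D
     = sl s (fun i => p (S i) * (INR (S i) ^ 2 * V - (INR (S i) - 1) * D))).
  { transitivity (sl s (fun i => V * (INR (S i) ^ 2 * p (S i)) + (- D) * ((INR (S i) - 1) * p (S i))));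
    [rewrite sl_plus, !sl_scal; ring | apply sl_ext; intros; ring]. }
  rewrite E. apply sl_le. intros i Hi. destruct i.
  - rewrite T1 by auto. simpl INR. fold V. ring_simplify. lra.
  - assert (Hu := T_ub N v HN Hp (S (S i)) ltac:(lia)). fold V D in Hu.
    assert (Hpi := Hneg (S (S i)) ltac:(lia)).
    assert (p (S (S i)) * (INR (S (S i)) ^ 2 * V - (INR (S (S i)) - 1) * D) <= p (S (S i)) * Tk N v (S (S i)))
      by (apply Rmult_le_compat_neg_l; auto).
    lra.
Qed.

Lemma Qup N s p v : (1 <= N)%nat -> periodic N v -> (forall k, (2 <= k <= s)%nat -> p k <= 0) ->
  sl s (fun i => p (S i) * Tk N v (S i)) <=
  sl s (fun i => INR (S i) ^ 2 * p (S i)) * W N (fun l => v l ^ 2)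
  - sl s (fun i => (INR (S i) ^ 4 - INR (S i) ^ 2) / 12 * p (S i)) * W N (fun l => (v l - v (l - 1)%Z) ^ 2).
Proof.
  intros HN Hp Hneg. set (V := W N (fun l => v l ^ 2)). set (D := W N (fun l => (v l - v (l - 1)%Z) ^ 2)).
  assert (E : sl s (fun i => INR (S i) ^ 2 * p (S i)) * V - sl s (fun i => (INR (S i) ^ 4 - INR (S i) ^ 2) / 12 * p (S i)) * D
     = sl s (fun i => p (S i) * (INR (S i) ^ 2 * V - (INR (S i) ^ 4 - INR (S i) ^ 2) / 12 * D))).
  { transitivity (sl s (fun i => V * (INR (S i) ^ 2 * p (S i)) + (- D) * ((INR (S i) ^ 4 - INR (S i) ^ 2) / 12 * p (S i))));
    [rewrite sl_plus, !sl_scal; ring | apply sl_ext; intros; field]. }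
  rewrite E. apply sl_le. intros i Hi. destruct i.
  - rewrite T1 by auto. simpl INR. fold V. ring_simplify. lra.
  - assert (Hu := T_lb N v HN Hp (S (S i))). fold V D in Hu.
    assert (Hpi := Hneg (S (S i)) ltac:(lia)).
    assert (p (S (S i)) * Tk N v (S (S i)) <= p (S (S i)) * (INR (S (S i)) ^ 2 * V - (INR (S (S i)) ^ 4 - INR (S (S i)) ^ 2) / 12 * D))
      by (apply Rmult_le_compat_neg_l; auto).
    lra.
Qed.

Lemma Q_form N s p u :
  W N (fun l => sumN 1 s (fun k => p k * (sumN 0 (k - 1) (fun j => dd N u (l + Z.of_nat j)%Z)) ^ 2))
  = sl s (fun i => p (S i) * Tk N (dd N u) (S i)).
Proof.
  rewrite (W_ext _ _ (fun l => sl s (fun i => p (S i) * Sk (dd N u) (S i) l ^ 2))).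
  2:{ intros l _. rewrite sumN_1. apply sl_ext; intros. rewrite sumN_0 by lia. reflexivity. }
  rewrite W_sl_exch. apply sl_ext; intros. rewrite W_scal. reflexivity.
Qed.

Lemma ratio_eq N Psi : (1 <= N)%nat -> inU N Psi -> Psi <> (fun _ => 0) ->
  l2eps N (dd N (dd N Psi)) / l2eps N (dd N Psi) =
  sqrt ((W N (fun l => (dd N Psi l - dd N Psi (l - 1)%Z) ^ 2) / eps N) / (eps N * W N (fun l => dd N Psi l ^ 2))).
Proof.
  intros HN HU Hne. assert (He := eps_pos N HN). assert (HV := V_pos N Psi HN HU Hne).
  unfold l2eps. fold (W N (fun l => dd N (dd N Psi) l ^ 2)). fold (W N (fun l => dd N Psi l ^ 2)).
  rewrite sqrt_div_alt by nra. f_equal. f_equal.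
  rewrite (W_ext _ _ (fun l => / eps N ^ 2 * (dd N Psi l - dd N Psi (l - 1)%Z) ^ 2)).
  2:{ intros. unfold dd at 1. field. lra. }
  rewrite W_scal. field. lra.
Qed.

Lemma mu_val N : (1 <= N)%nat -> eps N ^ 2 * mu_eps N ^ 2 = 2 - 2 * cos (PI / INR N).
Proof.
  intros HN. assert (He := eps_pos N HN).
  set (lam := 2 - 2 * cos (PI / INR N)).
  assert (Hlam : 0 <= lam) by (unfold lam; assert (H := COS_bound (PI / INR N)); lra).
  set (r1 := sqrt (lam / eps N ^ 2)).
  assert (Hg : Glb_Rbar (fun x => exists Psi : Z -> R,
    inU N Psi /\ Psi <> (fun _ => 0) /\
    x = l2eps N (dd N (dd N Psi)) / l2eps N (dd N Psi)) = Finite r1).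
  { apply is_glb_Rbar_unique. split.
    - intros x [Psi [HU [Hne ->]]]. simpl. rewrite ratio_eq by auto.
      apply sqrt_le_1_alt.
      assert (HV := V_pos N Psi HN HU Hne).
      assert (Hw := wirtinger N (dd N Psi) HN (dd_periodic N Psi (proj1 HU)) (dd_sum0 N Psi HN (proj1 HU))).
      fold lam in Hw.
      set (V := W N (fun l => dd N Psi l ^ 2)) in *.
      replace (lam / eps N ^ 2) with ((lam * V / eps N) / (eps N * V)) by (field; split; lra).
      unfold Rdiv. apply Rmult_le_compat_r; [left; apply Rinv_0_lt_compat; nra|].
      apply Rmult_le_compat_r; [left; apply Rinv_0_lt_compat; lra| lra].
    - intros b Hb. apply Hb. exists (psi1 N). split; [apply psi1_U; auto|split; [apply psi1_ne|]].
      rewrite ratio_eq by (auto; try apply psi1_U; try apply psi1_ne; auto).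
      assert (HV := V_pos N (psi1 N) HN (psi1_U N HN) (psi1_ne N)).
      rewrite (rec_D N (dd N (psi1 N)) (cos (PI / INR N)) HN (dd_periodic N _ (proj1 (psi1_U N HN)))
        (rec_dd N _ _ (psi1_rec N))).
      unfold r1. f_equal. fold lam. field. split; lra. }
  unfold mu_eps. rewrite Hg. simpl real. unfold r1. rewrite <- (Rsqr_pow2 (sqrt _)). rewrite Rsqr_sqrt.
  - field. lra.
  - apply Rcomplements.Rdiv_le_0_compat; [lra|]. nra.
Qed.

Theorem theorem5p3 (N s : nat) (F : R) (phi : R -> R) :
  (1 <= N)%nat -> (2 <= s)%nat -> 0 < F ->
  (forall x : R, 0 < x -> ex_derive phi x /\ ex_derive (Derive phi) x) ->
  (forall k : nat, (2 <= k <= s)%nat -> phi2 phi (INR k * F) <= 0) ->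
  exists B : R,
    sumN 2 s (fun k => (INR k - 1) * phi2 phi (INR k * F)) >= B /\
    B >= phi2 phi (2 * F) +
         sumN 3 s (fun k => ((INR k) ^ 4 - (INR k) ^ 2) / 12 * phi2 phi (INR k * F)) /\
    (stable_atomistic N s phi F <->
       A_sF s phi F - (eps N) ^ 2 * (mu_eps N) ^ 2 * B > 0).
Proof.
  intros HN Hs HF _ Hneg.
  set (p := fun k : nat => phi2 phi (INR k * F)).
  assert (Hneg' : forall k, (2 <= k <= s)%nat -> p k <= 0) by exact Hneg.
  set (Uall := sl s (fun i => (INR (S i) - 1) * p (S i))).
  set (Lall := sl s (fun i => (INR (S i) ^ 4 - INR (S i) ^ 2) / 12 * p (S i))).
  set (A := sl s (fun i => INR (S i) ^ 2 * p (S i))).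
  assert (EU : sumN 2 s (fun k => (INR k - 1) * phi2 phi (INR k * F)) = Uall).
  { unfold Uall. rewrite <- (sumN_1 s (fun k => (INR k - 1) * p k)), sumN_2 by auto.
    simpl INR. unfold p. ring. }
  assert (EL : phi2 phi (2 * F) + sumN 3 s (fun k => ((INR k) ^ 4 - (INR k) ^ 2) / 12 * phi2 phi (INR k * F)) = Lall).
  { unfold Lall. rewrite <- (sumN_1 s (fun k => (INR k ^ 4 - INR k ^ 2) / 12 * p k)), sumN_2, sumN_3 by auto.
    unfold p. replace (INR 2 * F) with (2 * F) by (simpl; ring). simpl INR. field. }
  assert (EA : A_sF s phi F = A) by (unfold A_sF, A; rewrite sumN_1; reflexivity).
  assert (HUL : Lall <= Uall).
  { unfold Lall, Uall. apply sl_le. intros i Hi. destruct i.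
    - simpl INR. lra.
    - assert (Hp := Hneg' (S (S i)) ltac:(lia)).
      assert (Hk : 2 <= INR (S (S i))) by (rewrite !S_INR; assert (H0 := pos_INR i); lra).
      set (k := INR (S (S i))) in *.
      assert (Hk2 : 12 <= k ^ 2 * (k + 1)) by (assert (4 <= k ^ 2) by nra; nra).
      assert (Hk3 : 0 <= (k - 1) * (k ^ 2 * (k + 1) - 12)) by (apply Rmult_le_pos; lra).
      assert ((k - 1) <= (k ^ 4 - k ^ 2) / 12) by (replace (k ^ 4 - k ^ 2) with ((k - 1) * (k ^ 2 * (k + 1))) by ring; lra).
      nra. }
  assert (HU0 : Uall <= 0).
  { unfold Uall. rewrite <- (Rmult_0_r (INR s)), <- sl_const. apply sl_le. intros i Hi. destruct i.
    - simpl INR. lra.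
    - assert (Hp := Hneg' (S (S i)) ltac:(lia)).
      assert (Hk : 2 <= INR (S (S i))) by (rewrite !S_INR; assert (H0 := pos_INR i); lra). nra. }
  rewrite EU, EL, EA, (mu_val N HN).
  set (lam := 2 - 2 * cos (PI / INR N)).
  assert (He := eps_pos N HN).

  destruct (classic (stable_atomistic N s phi F)) as [Hst|Hst].
  - exists Lall. split; [lra|split; [lra|]]. split; intros _; auto.
    assert (HU1 := psi1_U N HN). assert (Hn1 := psi1_ne N).
    specialize (Hst (psi1 N) HU1 Hn1). unfold W in *.
    fold (W N (fun l => sumN 1 s (fun k => phi2 phi (INR k * F) * (sumN 0 (k - 1) (fun j => dd N (psi1 N) (l + Z.of_nat j)%Z)) ^ 2))) in Hst.
    rewrite (Q_form N s p) in Hst.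
    set (v := dd N (psi1 N)) in *.
    assert (Hpv : periodic N v) by (apply dd_periodic; exact (proj1 HU1)).
    assert (Hup := Qup N s p v HN Hpv Hneg'). fold A Lall in Hup.
    assert (HD := rec_D N v (cos (PI / INR N)) HN Hpv (rec_dd N _ _ (psi1_rec N))). fold lam in HD.
    rewrite HD in Hup.
    assert (HV := V_pos N (psi1 N) HN HU1 Hn1). fold v in HV.
    set (V := W N (fun l => v l ^ 2)) in *.
    assert (0 < sl s (fun i => p (S i) * Tk N v (S i))) by nra.
    assert (0 < V * (A - lam * Lall)) by nra.
    nra.
  - exists Uall. split; [lra|split; [lra|]]. split; intros H; [contradiction|].
    exfalso. apply Hst. intros u HU Hne.
    unfold W in *. 
    fold (W N (fun l => sumN 1 s (fun k => phi2 phi (INR k * F) * (sumN 0 (k - 1) (fun j => dd N u (l + Z.of_nat j)%Z)) ^ 2))).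
    rewrite (Q_form N s p).
    set (v := dd N u).
    assert (Hpv : periodic N v) by (apply dd_periodic; exact (proj1 HU)).
    assert (Hlow := Qlow N s p v HN Hpv Hneg'). fold A Uall in Hlow.
    assert (Hw := wirtinger N v HN Hpv (dd_sum0 N u HN (proj1 HU))). fold lam in Hw.
    assert (HV := V_pos N u HN HU Hne). fold v in HV.
    set (V := W N (fun l => v l ^ 2)) in *.
    set (D := W N (fun l => (v l - v (l - 1)%Z) ^ 2)) in *.
    assert (- Uall * D >= - Uall * (lam * V)) by nra.
    assert (0 < V * (A - lam * Uall)) by nra.
    apply Rlt_gt. apply Rmult_lt_0_compat; [lra|]. nra.
Qed.
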